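(* Let $\delta>0$, data $(\mathbf{x}_i,y_i)$, $i=1,\dots,n$, with $\mathbf{x}_i\in\mathbb{R}^p$, $y_i\in\{-1,1\}$, and let $P_{\lambda_1,\lambda_2}(\boldsymbol\beta)=\sum_{j=1}^p P_{\lambda_1}(|\beta_j|)+\frac{\lambda_2}{2}\|\boldsymbol\beta\|_2^2$ be a penalty function. Define $$R(\boldsymbol\beta,\beta_0)=\frac1n\sum_{i=1}^n v\big(y_i(\beta_0+\mathbf{x}_i^\top\boldsymbol\beta)\big)+P_{\lambda_1,\lambda_2}(\boldsymbol\beta),\qquad R(\boldsymbol\beta,\beta_0\mid\delta)=\frac1n\sum_{i=1}^n B_\delta\big(y_i(\beta_0+\mathbf{x}_i^\top\boldsymbol\beta)\big)+P_{\lambda_1,\lambda_2}(\boldsymbol\beta),$$ where $v(t)=(1-t)_+$. Then $$\inf_{(\boldsymbol\beta,\beta_0)}R(\boldsymbol\beta,\beta_0)\le\inf_{(\boldsymbol\beta,\beta_0)}R(\boldsymbol\beta,\beta_0\mid\delta)\le\inf_{(\boldsymbol\beta,\beta_0)}R(\boldsymbol\beta,\beta_0)+\delta.$$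
   Context: $B_\delta$ (the BernSVM loss) is defined by $B_\delta(t)=(1-t)_+$ if $|t-1|>\delta$ and $B_\delta(t)=g_\delta(t)=\frac{1}{8\delta^{3}}\{\frac{(1-t+\delta)^{4}}{2}-(1-t-\delta)(1-t+\delta)^{3}\}$ if $|t-1|\le\delta$. The penalty $P_{\lambda_1}$ may be e.g. $\lambda_1|\beta_j|$, $\lambda_1 w_j|\beta_j|$, SCAD or MCP. *)

(* Defs.v *)
From HB Require Import structures.
From mathcomp Require Import all_boot all_order all_algebra.
From mathcomp Require Import all_classical all_reals.
From mathcomp Require Import ereal.
Set Implicit Arguments. Unset Strict Implicit. Unset Printing Implicit Defensive.
Import Order.TTheory GRing.Theory Num.Theory.
Local Open Scope ring_scope.

Section Defs.
Variable R : realType.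

Definition hinge (t : R) : R := Num.max 0 (1 - t).

Definition gdelta (d t : R) : R :=
  (8 * d ^+ 3)^-1 * ((1 - t + d) ^+ 4 / 2 - (1 - t - d) * (1 - t + d) ^+ 3).

Definition bern (d t : R) : R :=
  if d < `|t - 1| then hinge t else gdelta d t.

Definition penalty (p : nat) (P1 : R -> R) (l2 : R) (b : 'I_p -> R) : R :=
  \sum_(j < p) P1 `|b j| + l2 / 2 * \sum_(j < p) b j ^+ 2.

Definition risk (n p : nat) (loss : R -> R) (X : 'I_n -> 'I_p -> R)
  (y : 'I_n -> R) (P1 : R -> R) (l2 : R) (b : 'I_p -> R) (b0 : R) : R :=
  n%:R^-1 * \sum_(i < n) loss (y i * (b0 + \sum_(j < p) X i j * b j))
  + penalty P1 l2 b.

End Defs.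

(* Main.v *)
Require Import Defs.
From HB Require Import structures.
From mathcomp Require Import all_boot all_order all_algebra.
From mathcomp Require Import all_classical all_reals.
From mathcomp Require Import ereal.
From mathcomp Require Import ring lra.
Import Order.TTheory GRing.Theory Num.Theory.
Local Open Scope ring_scope.
Local Open Scope classical_set_scope.

Lemma gdelta_eq (R : realType) (d t : R) : 0 < d ->
  gdelta d t = (1 - t + d) ^+ 3 * (3 * d - (1 - t)) / (16 * d ^+ 3).
Proof.
move=> d0; rewrite /gdelta.
have : d ^+ 3 != 0 by rewrite expf_neq0 // gt_eqF.
move=> hd; field; exact: lt0r_neq0.
Qed.

Lemma bern_bounds (R : realType) (d t : R) : 0 < d ->
  hinge t <= bern d t /\ bern d t <= hinge t + d.
Proof.
move=> d0; rewrite /bern.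
case: ifP => [_|/negbT]; first by split => //; lra.
rewrite -leNgt => ht.
have [a0 b0] : 0 <= 1 - t + d /\ 0 <= d - (1 - t).
  move: ht; rewrite ler_norml => /andP [h1 h2]; split; lra.
set a := 1 - t + d in a0 *; set b := d - (1 - t) in b0 *.
have ha : 1 - t = (a - b) / 2 by rewrite /a /b; field.
have hd : d = (a + b) / 2 by rewrite /a /b; field.
have hgt : 0 < 16 * d ^+ 3 by rewrite mulr_gt0 // exprn_gt0.
rewrite gdelta_eq // /hinge.
have e3 : 3 * d - (1 - t) = a + 2 * b by rewrite ha hd; field.
rewrite e3.
have key1 : 0 <= a ^+ 3 * (a + 2 * b) by rewrite mulr_ge0 // ?exprn_ge0 //; lra.
have key2 : (1 - t) * (16 * d ^+ 3) <= a ^+ 3 * (a + 2 * b).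
  rewrite ha hd.
  rewrite -subr_ge0.
  have -> : a ^+ 3 * (a + 2 * b) - (a - b) / 2 * (16 * ((a + b) / 2) ^+ 3)
     = b ^+ 3 * (2 * a + b) by field.
  by rewrite mulr_ge0 // ?exprn_ge0 //; lra.
have key3 : a ^+ 3 * (a + 2 * b) <= d * (16 * d ^+ 3).
  rewrite hd -subr_ge0.
  have -> : (a + b) / 2 * (16 * ((a + b) / 2) ^+ 3) - a ^+ 3 * (a + 2 * b)
     = 2 * a ^+ 3 * b + 6 * a ^+ 2 * b ^+ 2 + 4 * a * b ^+ 3 + b ^+ 4 by field.
  rewrite !addr_ge0 // ?mulr_ge0 // ?exprn_ge0 //.
split.
- rewrite ge_max; apply/andP; split; first by rewrite divr_ge0 // ltW.
  by rewrite ler_pdivlMr.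
- rewrite ler_pdivrMr //; apply: (le_trans key3).
  rewrite ler_pM2r // lerDr.
  case: (lerP 0 (1 - t)) => h; by [].
Qed.

Lemma risk_bounds (R : realType) (d : R) (n p : nat)
  (X : 'I_n -> 'I_p -> R) (y : 'I_n -> R) (P1 : R -> R) (l2 : R) b b0 :
  0 < d ->
  risk (@hinge R) X y P1 l2 b b0 <= risk (@bern R d) X y P1 l2 b b0 /\
  risk (@bern R d) X y P1 l2 b b0 <= risk (@hinge R) X y P1 l2 b b0 + d.
Proof.
move=> d0; rewrite /risk; split.
- rewrite lerD2r ler_wpM2l ?invr_ge0 //; apply: ler_sum => i _.
  by case: (@bern_bounds R d (y i * (b0 + \sum_(j < p) X i j * b j)) d0).
- rewrite -addrAC lerD2r.
  apply: (le_trans (y := n%:R^-1 * \sum_(i < n) (hinge (y i * (b0 + \sum_(j < p) X i j * b j)) + d))).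
    rewrite ler_wpM2l ?invr_ge0 //; apply: ler_sum => i _.
    by case: (@bern_bounds R d (y i * (b0 + \sum_(j < p) X i j * b j)) d0).
  rewrite big_split /= mulrDr lerD2l sumr_const card_ord.
  case: n X y => [|m] X y; first by rewrite invr0 mul0r ltW.
  by rewrite -(mulr_natr d) mulrCA mulVf ?mulr1 // pnatr_eq0.
Qed.

Theorem proposition2 (R : realType) (d : R) (n p : nat)
  (X : 'I_n -> 'I_p -> R) (y : 'I_n -> R) (P1 : R -> R) (l2 : R) :
  0 < d ->
  (forall i, y i = 1 \/ y i = -1) ->
  (ereal_inf (range (fun bb : ('I_p -> R) * R =>
       (risk (@hinge R) X y P1 l2 bb.1 bb.2)%:E))
   <= ereal_inf (range (fun bb : ('I_p -> R) * R =>
       (risk (@bern R d) X y P1 l2 bb.1 bb.2)%:E)))%E /\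
  (ereal_inf (range (fun bb : ('I_p -> R) * R =>
       (risk (@bern R d) X y P1 l2 bb.1 bb.2)%:E))
   <= ereal_inf (range (fun bb : ('I_p -> R) * R =>
       (risk (@hinge R) X y P1 l2 bb.1 bb.2)%:E)) + d%:E)%E.
Proof.
move=> d0 _; split.
- apply: le_ereal_inf_tmp => _ [bb _ <-].
  apply: le_trans (ereal_inf_lbound _) _; first by exists bb.
  by rewrite lee_fin; case: (@risk_bounds R d n p X y P1 l2 bb.1 bb.2 d0).
- rewrite -leeBlDr //; apply: le_ereal_inf_tmp => _ [bb _ <-].
  rewrite leeBlDr //.
  apply: le_trans (ereal_inf_lbound _) _; first by exists bb.
  by rewrite -EFinD lee_fin; case: (@risk_bounds R d n p X y P1 l2 bb.1 bb.2 d0).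
Qed.
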